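(* Let $p$ be a prime, $n\ge2$, $\hat{X}_{n,p}=\{\mathbf{x}\in\mathbb{Z}_p^n : (\mathbf{x}[1],\dots,\mathbf{x}[n-1])\neq(0,\dots,0)\}$ (entries indexed $0,\dots,n-1$), and $\mathcal{L}_{n,p}=\{L_{\mathbf{a}}:\mathbf{a}\in\mathbb{Z}_p^n,\ \mathbf{a}[0]=1\}$ where $L_{\mathbf{a}}:\hat{X}_{n,p}\to\{0,1\}$, $L_{\mathbf{a}}(\mathbf{x})=1$ iff $\mathbf{a}\cdot\mathbf{x}\equiv1\pmod p$. For any query function $g:\hat{X}_{n,p}\to\{-1,+1\}$, there are at most $p^{2n/3+2}$ predicates $f\in\mathcal{L}_{n,p}$ that are not $1/p^{n/3}$-independent from $g$.
   Context: For a predicate $f$ on $\hat{X}_{n,p}$ let $S_f=\{\mathbf{x}\in\hat{X}_{n,p}: f(\mathbf{x})=1\}$. A predicate $f$ is $\xi$-independent from $g$ if $\left|\mathbf{E}_{x\in S_f}[g(x)]-\mathbf{E}_{x\in\hat{X}_{n,p}}[g(x)]\right|\le\xi$, expectations taken over the uniform distribution on the indicated sets. *)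

(* Defs.v *)
From HB Require Import structures.
From mathcomp Require Import all_boot all_order all_algebra.
From mathcomp Require Import all_classical all_reals all_analysis.
Set Implicit Arguments. Unset Strict Implicit. Unset Printing Implicit Defensive.
Import Order.TTheory GRing.Theory Num.Theory.
Local Open Scope ring_scope.

Definition vecZp (p n : nat) := {ffun 'I_n -> 'F_p}.

Definition Xhat (p n : nat) : {set vecZp p n} :=
  [set x : vecZp p n | [exists i : 'I_n, (0 < (i : nat))%N && (x i != 0)]].

Definition dotZp (p n : nat) (a x : vecZp p n) : 'F_p := \sum_(i < n) a i * x i.

(* L_a as a predicate on Xhat (value false outside Xhat) *)
Definition La (p n : nat) (a : vecZp p n) : {ffun vecZp p n -> bool} :=
  [ffun x => (x \in Xhat p n) && (dotZp a x == 1)].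

Definition Lclass (p n : nat) : {set {ffun vecZp p n -> bool}} :=
  [set La a | a in [set a : vecZp p n | [exists i : 'I_n, ((i : nat) == 0%N) && (a i == 1)]]].

Definition Sf (p n : nat) (f : {ffun vecZp p n -> bool}) : {set vecZp p n} :=
  [set x in Xhat p n | f x].

Definition Eset (R : realType) (T : finType) (A : {set T}) (g : T -> R) : R :=
  (\sum_(x in A) g x) / #|A|%:R.

Definition xi_independent (R : realType) (p n : nat) (xi : R)
  (f : {ffun vecZp p n -> bool}) (g : vecZp p n -> R) : Prop :=
  `| Eset (Sf f) g - Eset (Xhat p n) g | <= xi.

(* Main.v *)
Require Import Defs.
From HB Require Import structures.
From mathcomp Require Import all_boot all_order all_algebra.
From mathcomp Require Import all_classical all_reals all_analysis.
From mathcomp Require Import ring lra.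
Import Order.TTheory GRing.Theory Num.Theory.
Local Open Scope ring_scope.

Section Core.
Variables (R : realType) (p n : nat).
Hypothesis pr : prime p.
Hypothesis n2 : (1 < n)%N.

Definition i0 : 'I_n := Ordinal (ltnW n2).
Local Notation V := (vecZp p n).
Local Notation F := ('F_p).

Definition mk (c : F) (y : V) : V := [ffun i => if i == i0 then c else y i].
Definition Zs : {set V} := [set y : V | y i0 == 0].
Definition Ys : {set V} := [set y : V | (y i0 == 0) && (y \in Xhat p n)].
Definition As : {set V} := [set a : V | a i0 == 1].

Lemma mk_i0 (c : F) (y : V) : mk c y i0 = c.
Proof. by rewrite ffunE eqxx. Qed.

Lemma mk_ne (c : F) (y : V) (i : 'I_n) : i != i0 -> mk c y i = y i.
Proof. by rewrite ffunE => /negbTE ->. Qed.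

Lemma lt0_ne (i : 'I_n) : (0 < (i : nat))%N = (i != i0).
Proof. by rewrite lt0n -val_eqE. Qed.

Lemma mk_Xhat (c : F) (y : V) : (mk c y \in Xhat p n) = (y \in Xhat p n).
Proof.
rewrite /Xhat !inE; apply/existsP/existsP => -[i /andP[Hi Hy]]; exists i;
  have Hi' : i != i0 by rewrite -lt0_ne.
  by rewrite Hi /=; rewrite mk_ne in Hy.
by rewrite Hi /= mk_ne.
Qed.

Lemma mk_mk (c c' : F) (y : V) : mk c (mk c' y) = mk c y.
Proof. by apply/ffunP => i; rewrite !ffunE; case: (i == i0). Qed.

Lemma mk_id (x : V) : mk (x i0) x = x.
Proof. by apply/ffunP => i; rewrite !ffunE; case: eqP => // ->. Qed.

Lemma mk_inj (y : V) : y i0 = 0 -> injective (fun c => mk c y).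
Proof. by move=> _ c c' H; have := congr1 (fun x : V => x i0) H; rewrite /= !mk_i0. Qed.

Lemma sum_decomp (W : {set V}) (G : V -> R) :
  (forall y, y \in W -> y i0 = 0) ->
  \sum_(x | mk 0 x \in W) G x = \sum_(y in W) \sum_(c : F) G (mk c y).
Proof.
move=> HW.
rewrite (partition_big (fun x => mk 0 x) (mem W)) //=.
apply: eq_bigr => y Hy.
rewrite (reindex_onto (fun c => mk c y) (fun x => x i0)) /=.
  apply: eq_bigl => c; rewrite mk_mk mk_i0 eqxx andbT.
  have -> : mk 0 y = y by rewrite -[RHS]mk_id HW.
  by rewrite Hy eqxx.
move=> x /andP[_ /eqP <-]; by rewrite mk_mk mk_id.
Qed.

Lemma Ys_mk (x : V) : (mk 0 x \in Ys) = (x \in Xhat p n).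
Proof. by rewrite inE mk_i0 eqxx mk_Xhat. Qed.

Lemma sumX (G : V -> R) :
  \sum_(x in Xhat p n) G x = \sum_(y in Ys) \sum_(c : F) G (mk c y).
Proof.
rewrite -sum_decomp; last by move=> y; rewrite inE => /andP[/eqP].
by apply: eq_bigl => x; rewrite Ys_mk.
Qed.

Lemma sumV (G : V -> R) :
  \sum_(x : V) G x = \sum_(y in Zs) \sum_(c : F) G (mk c y).
Proof.
rewrite -sum_decomp; last by move=> y; rewrite inE => /eqP.
by apply: eq_bigl => x; rewrite inE mk_i0 eqxx.
Qed.


Lemma dot_mk (a : V) (c : F) (y : V) : a i0 = 1 -> y i0 = 0 ->
  dotZp a (mk c y) = c + dotZp a y.
Proof.
move=> Ha Hy; rewrite /dotZp (bigD1 i0) //= [in RHS](bigD1 i0) //= mk_i0 Ha Hy.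
rewrite mulr0 add0r mul1r; congr (_ + _); apply: eq_bigr => i Hi.
by rewrite mk_ne.
Qed.

Definition sh (t : F) (d a : V) : V := [ffun i => a i + t * d i].

Lemma dot_sh (t : F) (d a y : V) :
  dotZp (sh t d a) y = dotZp a y + t * dotZp d y.
Proof.
rewrite /dotZp mulr_sumr -big_split; apply: eq_bigr => i _.
by rewrite ffunE mulrDl mulrA.
Qed.

Lemma sh_A (t : F) (d a : V) : d i0 = 0 -> (sh t d a \in As) = (a \in As).
Proof. by move=> Hd; rewrite !inE ffunE Hd mulr0 addr0. Qed.

Lemma sh_bij (t : F) (d : V) : bijective (sh t d).
Proof.
exists (sh (- t) d) => a; apply/ffunP => i; rewrite !ffunE.
  by rewrite mulNr addrK.
by rewrite mulNr subrK.
Qed.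

Lemma shift_sum (G : V -> R) (d : V) (t : F) : d i0 = 0 ->
  \sum_(a in As) G a = \sum_(a in As) G (sh t d a).
Proof.
move=> Hd; rewrite (reindex (sh t d)) /=; last exact: onW_bij (sh_bij t d).
by apply: eq_bigl => a; rewrite sh_A.
Qed.

Lemma avg_sum (G : V -> R) (d : V) : d i0 = 0 ->
  p%:R * \sum_(a in As) G a = \sum_(a in As) \sum_(t : F) G (sh t d a).
Proof.
move=> Hd; rewrite exchange_big /=.
transitivity (\sum_(t : F) \sum_(a in As) G a).
  by rewrite sumr_const card_Fp // mulr_natl.
by apply: eq_bigr => t _; rewrite (shift_sum G d t Hd).
Qed.

Lemma pR_neq0 : (p%:R : R) != 0.
Proof. by rewrite pnatr_eq0 -lt0n prime_gt0. Qed.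

Lemma avg1 (G : F -> R) (y d : V) : d i0 = 0 -> dotZp d y = 1 ->
  p%:R * \sum_(a in As) G (dotZp a y) = #|As|%:R * \sum_(c : F) G c.
Proof.
move=> Hd Hdy; rewrite (avg_sum _ _ Hd).
transitivity (\sum_(a in As) \sum_(c : F) G c); last first.
  by rewrite sumr_const mulr_natl.
apply: eq_bigr => a _.
rewrite [RHS](reindex_inj (addrI (dotZp a y))) /=.
by apply: eq_bigr => t _; rewrite dot_sh Hdy mulr1.
Qed.

Lemma avg2 (G H : F -> R) (y y' d : V) : d i0 = 0 -> dotZp d y = 0 ->
  dotZp d y' = 1 -> \sum_(c : F) H c = 0 ->
  \sum_(a in As) G (dotZp a y) * H (dotZp a y') = 0.
Proof.
move=> Hd Hdy Hdy' HH.
set S := \sum_(a in As) _.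
suff : p%:R * S = 0 by move/eqP; rewrite mulf_eq0 (negbTE pR_neq0) /= => /eqP.
rewrite /S (avg_sum _ _ Hd) big1 // => a _.
under eq_bigr do rewrite !dot_sh Hdy Hdy' mulr0 addr0 mulr1.
rewrite -mulr_sumr (_ : \sum_(t : F) H (dotZp a y' + t) = 0) ?mulr0 //.
by rewrite -[RHS]HH [RHS](reindex_inj (addrI (dotZp a y'))).

Qed.


Definition ev (i : 'I_n) (al : F) : V := [ffun j => if j == i then al else 0].
Definition vadd (u w : V) : V := [ffun j => u j + w j].

Lemma dot_ev i al (v : V) : dotZp (ev i al) v = al * v i.
Proof.
rewrite /dotZp (bigD1 i) //= big1 ?addr0 => [|j /negbTE Hj]; rewrite ffunE.
  by rewrite eqxx.
by rewrite Hj mul0r.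
Qed.

Lemma dot_vadd (u w v : V) : dotZp (vadd u w) v = dotZp u v + dotZp w v.
Proof.
by rewrite /dotZp -big_split; apply: eq_bigr => j _; rewrite ffunE mulrDl.
Qed.

Lemma Ys_ex (y : V) : y \in Ys -> exists2 i : 'I_n, i != i0 & y i != 0.
Proof.
rewrite inE /Xhat inE => /andP[_ /existsP[i /andP[Hi Hyi]]].
by exists i => //; rewrite -lt0_ne.
Qed.

Lemma Ys_i0 (y : V) : y \in Ys -> y i0 = 0.
Proof. by rewrite inE => /andP[/eqP]. Qed.

Lemma sum_shift1 (G : F -> R) : \sum_(u : F) G (1 - u) = \sum_(c : F) G c.
Proof. by rewrite [RHS](reindex_inj (subrI 1)). Qed.

Lemma exists_d1 (y : V) : y \in Ys ->
  exists d : V, d i0 = 0 /\ dotZp d y = 1.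
Proof.
case/Ys_ex => i Hi Hyi; exists (ev i (y i)^-1); split.
  by rewrite ffunE eq_sym (negbTE Hi).
by rewrite dot_ev mulVf.
Qed.

Variable g : V -> R.
Hypothesis Hg : forall x, x \in Xhat p n -> g x = 1 \/ g x = -1.

Definition Gf (y : V) (c : F) := g (mk c y).
Definition mu (y : V) := (\sum_(c : F) Gf y c) / p%:R.
Definition kk (y : V) (c : F) := Gf y c - mu y.

Lemma sumG (y : V) : \sum_(c : F) Gf y c = p%:R * mu y.
Proof. by rewrite /mu mulrC divfK ?pR_neq0. Qed.

Lemma sum_kk (y : V) : \sum_(c : F) kk y c = 0.
Proof.
by rewrite /kk sumrB sumr_const card_Fp // -mulr_natl -sumG subrr.
Qed.

Lemma Q_le (y : V) : y \in Ys -> \sum_(c : F) kk y c ^+ 2 <= p%:R.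
Proof.
move=> Hy.
have HG c : Gf y c ^+ 2 = 1.
  have : mk c y \in Xhat p n by rewrite mk_Xhat; move: Hy; rewrite inE => /andP[].
  by case/Hg; rewrite /Gf => ->; rewrite ?sqrrN expr1n.
have -> : \sum_(c : F) kk y c ^+ 2 =
   \sum_(c : F) (Gf y c ^+ 2 - mu y * Gf y c) - mu y * \sum_(c : F) kk y c.
  rewrite mulr_sumr -sumrB; apply: eq_bigr => c _; rewrite /kk; ring.
rewrite sum_kk mulr0 subr0 sumrB -mulr_sumr sumG.
under eq_bigr do rewrite HG.
rewrite sumr_const card_Fp //.
have : (0 : R) <= p%:R by rewrite ler0n.
have : 0 <= mu y ^+ 2 by rewrite sqr_ge0.
rewrite -mulr_natl mulr1; nra.
Qed.

Definition D (a : V) := \sum_(y in Ys) kk y (1 - dotZp a y).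

Lemma sumSf (G : V -> R) (a : V) : a \in As ->
  \sum_(x in Sf (La a)) G x = \sum_(y in Ys) G (mk (1 - dotZp a y) y).
Proof.
rewrite inE => /eqP Ha.
transitivity (\sum_(x in Xhat p n | dotZp a x == 1) G x).
  apply: eq_bigl => x; rewrite /Sf inE ffunE.
  by case: (x \in Xhat p n).
rewrite big_mkcondr sumX; apply: eq_bigr => y Hy.
rewrite -big_mkcond /=; apply: big_pred1 => c /=.
rewrite (dot_mk a c y Ha (Ys_i0 y Hy)).
by rewrite [RHS]eq_sym subr_eq eq_sym.
Qed.

Lemma sumS (a : V) : a \in As ->
  \sum_(x in Sf (La a)) g x = D a + \sum_(y in Ys) mu y.
Proof.
move=> Ha; rewrite (sumSf g a Ha) /D -big_split; apply: eq_bigr => y _.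
by rewrite /kk /= subrK.
Qed.

Lemma cardR (T : finType) (A : {set T}) : (#|A|%:R : R) = \sum_(x in A) 1.
Proof. by rewrite sumr_const. Qed.

Lemma card_Sf (a : V) : a \in As -> #|Sf (La a)| = #|Ys|.
Proof.
move=> Ha; apply/eqP; rewrite -(eqr_nat R) !cardR (sumSf (fun _ => 1) a Ha).
by [].
Qed.

Lemma sumXg : \sum_(x in Xhat p n) g x = p%:R * \sum_(y in Ys) mu y.
Proof. by rewrite sumX mulr_sumr; apply: eq_bigr => y _; rewrite -sumG. Qed.

Lemma card_X : (#|Xhat p n|%:R : R) = p%:R * #|Ys|%:R.
Proof.
rewrite !cardR sumX mulr_sumr; apply: eq_bigr => y _.
by rewrite sumr_const card_Fp // mulr1.
Qed.

Lemma Ediff (a : V) : a \in As -> (#|Ys| > 0)%N ->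
  Eset (Sf (La a)) g - Eset (Xhat p n) g = D a / #|Ys|%:R.
Proof.
move=> Ha HY; rewrite /Eset sumS // sumXg card_X card_Sf //.
have HY' : (#|Ys|%:R : R) != 0 by rewrite pnatr_eq0 -lt0n.
have := pR_neq0 => Hp.
field.
by rewrite Hp HY'.
Qed.


Definition bad (y y' : V) : bool :=
  ~~ [exists d : V, [&& d i0 == 0, dotZp d y == 0 & dotZp d y' == 1]].

Definition TT (y y' : V) :=
  \sum_(a in As) kk y (1 - dotZp a y) * kk y' (1 - dotZp a y').

Lemma T_good (y y' : V) : ~~ bad y y' -> TT y y' = 0.
Proof.
rewrite negbK => /existsP[d /and3P[/eqP Hd /eqP H1 /eqP H2]].
apply: (avg2 (fun u => kk y (1 - u)) (fun u => kk y' (1 - u)) y y' d Hd H1 H2).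
by rewrite sum_shift1 sum_kk.
Qed.

Lemma sq_avg (y : V) : y \in Ys ->
  \sum_(a in As) kk y (1 - dotZp a y) ^+ 2 <= #|As|%:R.
Proof.
move=> Hy; have [d [Hd Hdy]] := exists_d1 y Hy.
have := avg1 (fun u => kk y (1 - u) ^+ 2) y d Hd Hdy.
move=> /= E; rewrite (sum_shift1 (fun c => kk y c ^+ 2)) in E.
have HQ := Q_le y Hy.
have Hp : (0 : R) < p%:R by rewrite ltr0n prime_gt0.
have HA : (0 : R) <= #|As|%:R by rewrite ler0n.
set S := \sum_(a in As) _ in E *.
set Q := \sum_(c : F) _ in E HQ.
have : p%:R * S <= p%:R * #|As|%:R.
  by rewrite E mulrC; apply: ler_wpM2r.
by rewrite ler_pM2l.
Qed.

Lemma T_bad (y y' : V) : y \in Ys -> y' \in Ys -> TT y y' <= #|As|%:R.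
Proof.
move=> Hy Hy'; have H1 := sq_avg y Hy; have H2 := sq_avg y' Hy'.
have : 2 * TT y y' <= \sum_(a in As) kk y (1 - dotZp a y) ^+ 2 +
                   \sum_(a in As) kk y' (1 - dotZp a y') ^+ 2.
  rewrite /TT mulr_sumr -big_split /=; apply: ler_sum => a _.
  set u := kk y _; set v := kk y' _.
  have : 0 <= (u - v) ^+ 2 by rewrite sqr_ge0.
  nra.
lra.
Qed.

Definition scl (l : F) (y : V) : V := [ffun j => l * y j].

Lemma bad_sub (y : V) : y \in Ys ->
  [set y' in Ys | bad y y'] \subset (scl ^~ y) @: [set~ 0].
Proof.
move=> Hy; have Hy0 := Ys_i0 y Hy; have [i Hi Hyi] := Ys_ex y Hy.
apply/fintype.subsetP => y'; rewrite inE => /andP[Hy' Hb].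
have Hy'0 := Ys_i0 y' Hy'.
set l := y' i / y i.
have E : y' = scl l y.
  apply/ffunP => j; rewrite ffunE.
  case: (eqVneq (y' j) (l * y j)) => // hne; exfalso.
  have Hj0 : j != i0.
    by apply: contraNneq hne => ->; rewrite Hy0 Hy'0 mulr0.
  have Hji : j != i.
    by apply: contraNneq hne => ->; rewrite /l divfK.
  move/negP: Hb; apply; apply/existsP.
  set c := (y' j - l * y j)^-1.
  have Hc : y' j - l * y j != 0 by rewrite subr_eq0.
  exists (vadd (ev j c) (ev i (- (c * y j / y i)))).
  rewrite !dot_vadd !dot_ev !ffunE (eq_sym i0 j) (negbTE Hj0).
  rewrite (eq_sym i0 i) (negbTE Hi) addr0 eqxx /=.
  have Hc' : y' j * y i - y' i * y j != 0.
    have -> : y' j * y i - y' i * y j = (y' j - l * y j) * y i.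
      by rewrite /l; field.
    by rewrite mulf_neq0.
  by apply/andP; split; apply/eqP; rewrite /c /l; field; rewrite Hyi Hc'.
apply/imsetP; exists l => //; rewrite !inE.
apply: contraTneq Hy' => Hl; rewrite E Hl.
rewrite inE negb_and; apply/orP; right; rewrite /Xhat inE negb_exists.
by apply/forallP => j; rewrite ffunE mul0r eqxx andbF.
Qed.

Lemma bad_count (y : V) : y \in Ys ->
  (#|[set y' in Ys | bad y y']| <= p.-1)%N.
Proof.
move=> Hy; apply: (leq_trans (subset_leq_card (bad_sub y Hy))).
by apply: (leq_trans (leq_imset_card _ _)); rewrite cardsC1 card_Fp.
Qed.

Lemma sumD2 : \sum_(a in As) D a ^+ 2 <= (#|Ys| * p.-1 * #|As|)%:R.
Proof.
have -> : \sum_(a in As) D a ^+ 2 = \sum_(y in Ys) \sum_(y' in Ys) TT y y'.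
  rewrite /TT /D.
  under eq_bigr do rewrite expr2 mulr_suml; rewrite exchange_big /=.
  apply: eq_bigr => y _.
  under eq_bigr do rewrite mulr_sumr; rewrite exchange_big /=.
  by [].
apply: (@le_trans _ _ (\sum_(y in Ys) ((p.-1)%:R * #|As|%:R : R))); last first.
  by rewrite sumr_const -[_ *+ #|Ys|]mulr_natr !natrM [X in X <= _]mulrC mulrA.
apply: ler_sum => y Hy.
apply: (@le_trans _ _ (\sum_(y' in [set y' in Ys | bad y y']) (#|As|%:R : R))).
  rewrite [X in _ <= X]big_mkcond [X in X <= _]big_mkcond /=.
  apply: ler_sum => y' _.
  have -> : (y' \in [set y' in Ys | bad y y']) = (y' \in Ys) && bad y y'.
    by rewrite [in LHS]inE.
  case: (boolP (y' \in Ys)) => Hy' /=; last by rewrite lexx.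
  case: (boolP (bad y y')) => Hb.
    exact: T_bad.
  by rewrite T_good ?lexx.
rewrite sumr_const -[_ *+ #|[set _ in _ | _]|]mulr_natr mulrC.
apply: ler_wpM2r; first by rewrite ler0n.
by rewrite ler_nat bad_count.
Qed.


Definition z0 : V := [ffun _ => 0].

Lemma Zs_eq : Zs = z0 |: Ys.
Proof.
apply/finset.setP => y; rewrite !inE.
case: (eqVneq y z0) => [->|Hne] /=; first by rewrite ffunE eqxx.
case: (eqVneq (y i0) 0) => //= H0.
have : [exists i, y i != 0].
  apply: contraR Hne => /existsPn H; apply/eqP/ffunP => i; rewrite ffunE.
  by apply/eqP; move: (H i); rewrite negbK.
case/existsP => i Hi.
rewrite /Xhat ?inE; apply/esym/existsP; exists i.
case: (eqVneq i i0) => [Ei|Ei]; first by rewrite Ei H0 eqxx in Hi.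
by rewrite lt0_ne Ei Hi.
Qed.

Lemma z0_notin : z0 \notin Ys.
Proof.
rewrite inE negb_and /Xhat inE negb_exists; apply/orP; right.
by apply/forallP => j; rewrite ffunE eqxx andbF.
Qed.

Lemma card_Zs : #|Zs| = #|Ys|.+1.
Proof. by rewrite Zs_eq cardsU1 z0_notin. Qed.

Lemma As_eq : As = (mk 1) @: Zs.
Proof.
apply/finset.setP => a; rewrite inE; apply/eqP/imsetP => [Ha|[y _ ->]].
  exists (mk 0 a); first by rewrite inE mk_i0.
  by rewrite mk_mk -Ha mk_id.
by rewrite mk_i0.
Qed.

Lemma card_As : #|As| = #|Zs|.
Proof.
rewrite As_eq card_in_imset // => y y' Hy Hy' E.
rewrite -[y]mk_id -[y']mk_id.
have -> : y i0 = 0 by move: Hy; rewrite inE => /eqP.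
have -> : y' i0 = 0 by move: Hy'; rewrite inE => /eqP.
by rewrite -(mk_mk 0 1 y) -(mk_mk 0 1 y') E.
Qed.

Definition i1 : 'I_n := Ordinal n2.

Lemma i1_ne : i1 != i0.
Proof. by rewrite -lt0_ne. Qed.

Lemma card_Zs_ge : (p <= #|Zs|)%N.
Proof.
rewrite -{1}(card_Fp pr) -cardsT -(card_imset [set: F] (f := ev i1)).
  apply: subset_leq_card; apply/fintype.subsetP => y /imsetP[c _ ->].
  by rewrite inE ffunE (eq_sym i0 i1) (negbTE i1_ne).
by move=> c c' E; have := congr1 (fun v : V => v i1) E; rewrite !ffunE eqxx.
Qed.

Lemma Lclass_eq : Lclass p n = (@La p n) @: As.
Proof.
rewrite /Lclass.
suff -> : [set a : V | [exists i : 'I_n, ((i : nat) == 0%N) && (a i == 1)]] = As by [].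
apply/finset.setP => a; rewrite !inE.
apply/existsP/idP => [[i /andP[/eqP Hi Ha]]|Ha].
  by have -> : i0 = i by apply: val_inj; rewrite /= Hi.
by exists i0; rewrite Ha andbT.
Qed.

Lemma main_core (xi : R) : 0 <= xi ->
  (#|[set f in Lclass p n | ~~ `[< xi_independent xi f g >]]|%:R : R) * xi ^+ 2
   * #|Ys|%:R ^+ 2 <= (#|Ys| * p.-1 * #|As|)%:R.
Proof.
move=> Hxi.
set B := [set a in As | ~~ `[< xi_independent xi (La a) g >]].
have HYpos : (0 < #|Ys|)%N.
  have := card_Zs_ge; rewrite card_Zs => H.
  by have := leq_trans (prime_gt1 pr) H; rewrite ltnS.
have HY : (0 : R) < #|Ys|%:R by rewrite ltr0n.
have HN : (#|[set f in Lclass p n | ~~ `[< xi_independent xi f g >]]| <= #|B|)%N.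
  apply: (leq_trans _ (leq_imset_card (@La p n) B)).
  apply: subset_leq_card; apply/fintype.subsetP => f.
  rewrite inE Lclass_eq => /andP[/imsetP[a Ha ->] Hb].
  by apply/imsetP; exists a => //; rewrite inE Ha Hb.
apply: le_trans (sumD2).
apply: (@le_trans _ _ (#|B|%:R * xi ^+ 2 * #|Ys|%:R ^+ 2)).
  apply: ler_wpM2r; first exact: sqr_ge0.
  apply: ler_wpM2r; first exact: sqr_ge0.
  by rewrite ler_nat.
apply: (@le_trans _ _ (\sum_(a in B) D a ^+ 2)).
  rewrite -mulrA [X in X <= _]mulr_natl -sumr_const; apply: ler_sum => a.
  rewrite inE => /andP[Ha /asboolPn Hb].
  have : xi < `|D a / #|Ys|%:R|.
    by rewrite ltNge; apply/negP => H; apply: Hb; rewrite /xi_independent Ediff.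
  rewrite normrM normfV (gtr0_norm HY) ltr_pdivlMr // => H.
  rewrite -(real_normK (num_real (D a))) -exprMn.
  have H0 : 0 <= xi * #|Ys|%:R by rewrite mulr_ge0 // ltW.
  move: H H0; set u := xi * _; set v := `|D a|; move=> H H0.
  apply: ltW; nra.
rewrite [X in _ <= X]big_mkcond [X in X <= _]big_mkcond /=.
apply: ler_sum => a _; rewrite inE.
case: (a \in As) => /=; last by rewrite lexx.
by case: ifP => _; rewrite ?lexx ?sqr_ge0.
Qed.

End Core.

Theorem mainTheorem4 (R : realType) (p n : nat) (g : vecZp p n -> R) :
  prime p -> (2 <= n)%N ->
  (forall x, x \in Xhat p n -> g x = 1 \/ g x = -1) ->
  (#|[set f in Lclass p n |
       ~~ `[< xi_independent ((p%:R `^ (n%:R / 3))^-1) f g >]]|%:R : R)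
    <= p%:R `^ (2 * n%:R / 3 + 2).
Proof.
move=> pr n2 Hg.
have Hq2 : (2 : R) <= p%:R by rewrite ler_nat prime_gt1.
have Hq0 : (0 : R) < p%:R by rewrite ltr0n prime_gt0.
set P := p%:R `^ (n%:R / 3).
have HP : 0 < P by apply: powR_gt0.
have Hxi : 0 <= P^-1 by rewrite invr_ge0 ltW.
have := @main_core R p n pr n2 g Hg _ Hxi.
have := @card_Zs_ge p n pr n2.
rewrite card_As card_Zs.
set N := (#|_|%:R : R).
set Y := #|Ys _ _ _|.
move=> HYp H.
have -> : 2 * n%:R / 3 + 2 = n%:R / 3 * 2%:R + 2%:R :> R by ring.
rewrite powRD; last by apply/implyP => _; rewrite pnatr_eq0 -lt0n prime_gt0.
rewrite powRrM -/P !powR_mulrn ?ler0n ?(ltW HP) //.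
have Hy : (p%:R : R) <= Y%:R + 1 by rewrite natr1 ler_nat.
have Hp1 : ((p.-1)%:R : R) = p%:R - 1 by rewrite -[in RHS](prednK (prime_gt0 pr)) -natr1 addrK.
rewrite !natrM Hp1 -natr1 in H.
set y := (Y%:R : R) in H Hy *.
set q := (p%:R : R) in H Hy Hq2 Hq0 *.
have e : N * P^-1 ^+ 2 * y ^+ 2 * P ^+ 2 = N * y ^+ 2.
  by field; rewrite gt_eqF.
have H2 : N * y ^+ 2 <= y * (q - 1) * (y + 1) * P ^+ 2.
  rewrite -e; apply: ler_wpM2r; [exact: exprn_ge0 (ltW HP) | exact: H].
have Hy1 : 1 <= y by lra.
have H3 : (q - 1) * (y + 1) <= q ^+ 2 * y.
  have : 0 <= (y - 1) * (q ^+ 2 - q + 1) by apply: mulr_ge0; nra.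
  nra.
have H4 : N * y ^+ 2 <= (P ^+ 2 * q ^+ 2) * y ^+ 2.
  apply: (le_trans H2).
  have -> : y * (q - 1) * (y + 1) * P ^+ 2 = ((q - 1) * (y + 1)) * (y * P ^+ 2) by ring.
  have -> : P ^+ 2 * q ^+ 2 * y ^+ 2 = (q ^+ 2 * y) * (y * P ^+ 2) by ring.
  by apply: ler_wpM2r => //; rewrite mulr_ge0 // ?sqr_ge0; lra.
by rewrite ler_pM2r ?exprn_gt0 // in H4; lra.
Qed.
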